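(* Let $G$ be an index coding problem and let $G'$ be the problem obtained from $G$ by deleting all edges $i\to j$ (i.e., removing $i$ from $A_j$) that do not lie on any directed cycle of the side information graph. Then $G$ and $G'$ have the same capacity region.
   Context: Index coding: an instance with $n$ messages is specified by side information sets $A_1,\ldots,A_n$ with $A_j\subseteq[1:n]\setminus\{j\}$, equivalently a directed side information graph on $[1:n]$ with an edge $i\to j$ iff $i\in A_j$. A $(t_1,\ldots,t_n,r)$ index code (with $t_j$ nonnegative integers, $r$ a positive integer) consists of an encoder $\phi:\prod_i\{0,1\}^{t_i}\to\{0,1\}^r$ and decoders $\psi_j:\{0,1\}^r\times\prod_{k\in A_j}\{0,1\}^{t_k}\to\{0,1\}^{t_j}$ with $\psi_j(\phi(x^n),(x_k)_{k\in A_j})=x_j$ for all message tuples $x^n$ and all $j$. A nonnegative rate tuple is achievable if $R_j\le t_j/r$ for all $j$ for some such code; the capacity region is the closure of the set of achievable rate tuples. *)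

(* Defs.v *)
From mathcomp Require Import all_boot.
From Stdlib Require Import Reals.

Set Implicit Arguments.
Unset Strict Implicit.
Unset Printing Implicit Defensive.

Definition side_info_ok (n : nat) (A : 'I_n -> {set 'I_n}) : Prop :=
  forall j : 'I_n, j \notin A j.

Definition sig_edge (n : nat) (A : 'I_n -> {set 'I_n}) : rel 'I_n :=
  fun i j => i \in A j.

Definition msgs (n : nat) (t : 'I_n -> nat) : Type :=
  forall i : 'I_n, (t i).-tuple bool.

Definition is_index_code (n : nat) (A : 'I_n -> {set 'I_n})
    (t : 'I_n -> nat) (r : nat)
    (phi : msgs t -> r.-tuple bool)
    (psi : forall j : 'I_n, r.-tuple bool ->
             (forall k : 'I_n, k \in A j -> (t k).-tuple bool) ->
             (t j).-tuple bool) : Prop :=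
  forall (x : msgs t) (j : 'I_n), psi j (phi x) (fun k _ => x k) = x j.

Definition achievable (n : nat) (A : 'I_n -> {set 'I_n}) (Rt : 'I_n -> R) : Prop :=
  (forall j, 0 <= Rt j)%R /\
  exists (t : 'I_n -> nat) (r : nat) (phi : msgs t -> r.-tuple bool)
         (psi : forall j : 'I_n, r.-tuple bool ->
             (forall k : 'I_n, k \in A j -> (t k).-tuple bool) ->
             (t j).-tuple bool),
    (0 < r)%N /\ is_index_code phi psi /\
    (forall j, Rt j <= INR (t j) / INR r)%R.

Definition closure_Rn (n : nat) (S : ('I_n -> R) -> Prop) (Rt : 'I_n -> R) : Prop :=
  forall eps : R, (0 < eps)%R ->
    exists Rt' : 'I_n -> R, S Rt' /\ forall j, (Rabs (Rt j - Rt' j) < eps)%R.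

Definition capacity_region (n : nat) (A : 'I_n -> {set 'I_n}) : ('I_n -> R) -> Prop :=
  closure_Rn (achievable A).

(* Edge i -> j lies on a directed cycle iff j reaches i in the graph. *)
Definition edge_on_cycle (n : nat) (A : 'I_n -> {set 'I_n}) (i j : 'I_n) : bool :=
  (i \in A j) && connect (sig_edge A) j i.

Definition prune_acyclic_edges (n : nat) (A : 'I_n -> {set 'I_n}) : 'I_n -> {set 'I_n} :=
  fun j => [set i | edge_on_cycle A i j].

(* Main.v *)
Require Import Defs.
From mathcomp Require Import all_boot.
From Stdlib Require Import Reals.
From Stdlib Require Import FunctionalExtensionality.
From mathcomp Require Import zify.
From mathcomp Require Import all_boot.

Set Implicit Arguments.
Unset Strict Implicit.
Unset Printing Implicit Defensive.

Definition bij (T U : finType) (H : #|T| = #|U|) (x : T) : U :=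
  enum_val (cast_ord H (enum_rank x)).

Lemma bijK (T U : finType) (H : #|T| = #|U|) : cancel (bij H) (bij (esym H)).
Proof. by move=> x; rewrite /bij enum_valK cast_ordK enum_rankK. Qed.

Definition is_gcode (n : nat) (A : 'I_n -> {set 'I_n}) (t : 'I_n -> nat)
    (W : finType) (phi : msgs t -> W)
    (psi : forall j : 'I_n, W ->
             (forall k : 'I_n, k \in A j -> (t k).-tuple bool) ->
             (t j).-tuple bool) : Prop :=
  forall (x : msgs t) (j : 'I_n), psi j (phi x) (fun k _ => x k) = x j.

Lemma gcode_bits n (A : 'I_n -> {set 'I_n}) t (W : finType) phi psi r :
  @is_gcode n A t W phi psi -> #|W| <= 2 ^ r ->
  exists (phi' : msgs t -> r.-tuple bool) psi', is_index_code (A:=A) phi' psi'.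
Proof.
move=> Hc HW.
have H : #|W| <= #|{: r.-tuple bool}|.
  rewrite card_tuple card_bool. exact HW.
pose g (w : W) : r.-tuple bool := enum_val (widen_ord H (enum_rank w)).
have ginj : injective g.
  move=> w1 w2 E; have /(congr1 val) /= E' := enum_val_inj E.
  by apply: enum_rank_inj; apply: val_inj.
exists (fun x => g (phi x)).
exists (fun j y s => match [pick w | g w == y] with
                     | Some w => psi j w s
                     | None => nseq_tuple (t j) false end).
move=> x j.
case: pickP => [w /eqP /ginj -> | /(_ (phi x))]; first exact: Hc.
by rewrite eqxx.
Qed.

Lemma card_split k t :
  #|{: (k * t).-tuple bool}| = #|{: {ffun 'I_k -> t.-tuple bool}}|.
Proof.
by rewrite card_ffun !card_tuple card_bool card_ord -expnM mulnC.
Qed.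

Lemma kfold n (A : 'I_n -> {set 'I_n}) t r (phi : msgs t -> r.-tuple bool) psi k :
  is_index_code (A:=A) phi psi ->
  exists (phi' : msgs (fun j => k * t j) -> (k * r).-tuple bool) psi',
    is_index_code (A:=A) phi' psi'.
Proof.
move=> Hc.
pose sp j := bij (card_split k (t j)).
pose usp j := bij (esym (card_split k (t j))).
apply: (@gcode_bits n A (fun j => k * t j) {ffun 'I_k -> r.-tuple bool}
   (fun x => [ffun b => phi (fun i => sp i (x i) b)])
   (fun j w s => usp j [ffun b => psi j (w b) (fun l hl => sp l (s l hl) b)])).
  move=> x j /=.
  have -> : [ffun b => psi j ([ffun b0 => phi (fun i => sp i (x i) b0)] b)
                 (fun l _ => sp l (x l) b)] = sp j (x j).
    by apply/ffunP => b; rewrite !ffunE (Hc (fun i => sp i (x i) b) j).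
  exact: bijK.
by rewrite card_ffun card_tuple card_bool card_ord -expnM mulnC.
Qed.

Lemma disjointsU (T : finType) (A B C : {set T}) :
  [disjoint A :|: B & C] = [disjoint A & C] && [disjoint B & C].
Proof. by rewrite -!setI_eq0 setIUl setU_eq0. Qed.

Section Hit.
Variables (X Y : finType) (S : X -> {set Y}) (m K : nat).
Hypotheses (m0 : 0 < m) (Sm : forall x, m <= #|S x|) (YK : #|Y| <= m * K).

Lemma hit_step (R : {set X}) : R != set0 ->
  exists y, #|R| <= #|[set x in R | y \in S x]| * K.
Proof.
case/set0Pn=> x0 x0R.
have Y0 : 0 < #|Y| by apply: leq_trans m0 (leq_trans (Sm x0) (max_card _)).
have R0 : 0 < #|R| by apply/card_gt0P; exists x0.
case: (boolP [exists y, #|R| <= #|[set x in R | y \in S x]| * K]).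
  by case/existsP=> y Hy; exists y.
rewrite negb_exists => /forallP Hn.
have E : \sum_y #|[set x in R | y \in S x]| = \sum_(x in R) #|S x|.
  transitivity (\sum_y \sum_(x in R) (y \in S x : nat)).
    apply: eq_bigr => y _; rewrite -sum1_card big_mkcond /= [RHS]big_mkcond /=.
    apply: eq_bigr => x _; rewrite !inE; case: (x \in R); case: (y \in S x) => //.
  rewrite exchange_big /=; apply: eq_bigr => x _.
  rewrite -sum1_card [RHS]big_mkcond /=; apply: eq_bigr => y _.
  by case: (y \in S x).
have L1 : \sum_y #|[set x in R | y \in S x]| * K <= \sum_(y : Y) (#|R|).-1.
  apply: leq_sum => y _; have := Hn y; rewrite -ltnNge; lia.
have L2 : #|R| * m <= \sum_(x in R) #|S x|.
  rewrite -sum1_card big_distrl /=; apply: leq_sum => x _; rewrite mul1n; exact: Sm.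
rewrite -big_distrl /= E sum_nat_const cardT -cardE in L1.
have : #|R| * m * K <= #|Y| * (#|R|).-1.
  apply: leq_trans L1; exact: leq_mul L2 (leqnn K).
nia.
Qed.

Definition unc (R : {set X}) (C : {set Y}) := [set x in R | [disjoint C & S x]].

Lemma hit_steps h (R : {set X}) j : 0 < h -> exists C : {set Y},
  #|C| <= j /\ (#|unc R C| < h \/ #|unc R C| * K + j * h <= #|R| * K).
Proof.
move=> h0; elim: j => [|j [C [HC Hu]]].
  exists set0; rewrite cards0; split=> //; right.
  rewrite mul0n addn0; apply: leq_mul (leqnn K); apply: subset_leq_card.
  by apply/subsetP=> x; rewrite inE => /andP[].
case: (ltnP #|unc R C| h) => Hh.
  by exists C; split; [lia | left].
case: Hu => Hu; first lia.
have ne : unc R C != set0 by apply/set0Pn/card_gt0P; lia.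
have [y Hy] := hit_step ne.
exists (y |: C); split.
  rewrite cardsU1; case: (y \notin C); rewrite /= ?add0n ?add1n; lia.
right.
set R1 := unc R C in Hy Hu Hh ne *.
have -> : unc R (y |: C) = R1 :\: [set x in R1 | y \in S x].
  apply/setP=> x; rewrite !inE disjointsU disjoints1.
  by case: (x \in R); case: (y \in S x); case: [disjoint C & S x].
have Hsub : [set x in R1 | y \in S x] \subset R1.
  by apply/subsetP=> x; rewrite inE => /andP[].
have := cardsID [set x in R1 | y \in S x] R1.
rewrite (setIidPr Hsub) => Ec.
nia.
Qed.

Lemma hit_halve l (R : {set X}) : 0 < K -> #|R| < 2 ^ l ->
  exists C : {set Y}, #|C| <= K * l /\ forall x, x \in R -> ~~ [disjoint C & S x].
Proof.
move=> K0; elim: l R => [|l IH] R HR.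
  exists set0; split; first by rewrite cards0.
  move=> x xR.
  by move: HR; rewrite expn0 ltnS leqn0 cards_eq0 => /eqP R0; rewrite R0 inE in xR.
have h0 : 0 < 2 ^ l by rewrite expn_gt0.
have [C1 [HC1 Hu]] := hit_steps R K h0.
have Hu' : #|unc R C1| < 2 ^ l.
  case: Hu => // Hu; rewrite expnS in HR; nia.
have [C2 [HC2 H2]] := IH _ Hu'.
exists (C1 :|: C2); split.
  apply: leq_trans (leq_card_setU _ _) _; rewrite mulnS; lia.
move=> x xR; rewrite disjointsU negb_and.
case: (boolP [disjoint C1 & S x]) => //= D1.
by apply: H2; rewrite inE xR D1.
Qed.

End Hit.

Section T.
Variables (n : nat) (t : 'I_n -> nat).
Definition X := {dffun forall i : 'I_n, (t i).-tuple bool}.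
Lemma cardX : #|{: X}| = 2 ^ (\sum_i t i).
Proof.
rewrite card_dep_ffun expn_sum foldrE big_map big_enum /=.
by apply: eq_bigr => i _; rewrite card_tuple card_bool.
Qed.
Definition mk (x : msgs t) : X := [ffun i => x i].
Lemma mkE x i : mk x i = x i. Proof. by rewrite ffunE. Qed.
End T.

Definition extend_aux n (t : 'I_n -> nat) (D : {set 'I_n})
  (s : forall k, k \in D -> (t k).-tuple bool) (d : forall k, (t k).-tuple bool) k
  (b : bool) : (k \in D) = b -> (t k).-tuple bool :=
  match b as b' return ((k \in D) = b' -> (t k).-tuple bool) with
   | true => fun h => s k h
   | false => fun _ => d k end.

Definition extend n (t : 'I_n -> nat) (D : {set 'I_n})
  (s : forall k, k \in D -> (t k).-tuple bool) (d : forall k, (t k).-tuple bool) k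
  : (t k).-tuple bool := extend_aux s d (erefl (k \in D)).

Lemma extendE n (t : 'I_n -> nat) (D : {set 'I_n}) (x d : forall k, (t k).-tuple bool) k :
  extend (D:=D) (fun k _ => x k) d k = if k \in D then x k else d k.
Proof.
rewrite /extend.
suff H : forall b (e : (k \in D) = b),
  extend_aux (D:=D) (fun k _ => x k) d e = if b then x k else d k by apply: H.
by move=> b e; case: b e.
Qed.

Definition splitA n (A : 'I_n -> {set 'I_n}) (Q : {set 'I_n}) j :=
  if j \in Q then A j :&: Q else A j.

Lemma split1 n (A : 'I_n -> {set 'I_n}) t r (phi : msgs t -> r.-tuple bool) psi
    (Q : {set 'I_n}) w :
  is_index_code (A:=A) phi psi ->
  (forall v u, v \notin Q -> u \in A v -> u \notin Q) ->
  (\sum_i t i).+1 <= 2 ^ w ->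
  exists (phi' : msgs t -> (r + 1 + w).-tuple bool) psi',
    is_index_code (A:=splitA A Q) phi' psi'.
Proof.
move=> Hc HQ Hw.
pose merge (u v : X t) : X t := [ffun i => if i \in Q then v i else u i].
pose phiX (u : X t) := phi (fun i => u i).
pose S (u : X t) := [set phiX (merge u z) | z : X t].
pose x0 : X t := [ffun i => nseq_tuple (t i) false].
pose c0 := [arg min_(u < x0) #|S u|].
have c0min : forall u, #|S c0| <= #|S u|.
  by rewrite /c0; case: arg_minnP => // u _ H v; exact: H.
pose m := #|S c0|.
have wS : phiX (merge c0 c0) \in S c0 by apply: imset_f.
have m0 : 0 < m by apply/card_gt0P; exists (phiX (merge c0 c0)).
have mY : m <= 2 ^ r.
  by rewrite /m; apply: leq_trans (max_card _) _; rewrite card_tuple card_bool.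
pose K := (2 ^ r %/ m).+1.
have YK : #|{: r.-tuple bool}| <= m * K.
  by rewrite card_tuple card_bool mulnC; apply: ltnW; apply: ltn_ceil.
have HR : #|[set: X t]| < 2 ^ (\sum_i t i).+1.
  rewrite cardsT cardX expnS; have := expn_gt0 2 (\sum_i t i); lia.
have [C [HC Hhit]] := hit_halve m0 c0min YK (ltn0Sn _) HR.
have [yc ycC _] : exists2 y, y \in C & y \in S x0.
  have := Hhit x0 (in_setT _); rewrite -setI_eq0 => /set0Pn [y].
  by rewrite inE => /andP[yC yS]; exists y.
pose choose (u : X t) := odflt yc [pick y in C :&: S u].
have chooseP : forall u, choose u \in C /\ choose u \in S u.
  move=> u; rewrite /choose; case: pickP => [y|].
    by rewrite inE => /andP[].
  move=> H0; have := Hhit u (in_setT _); rewrite -setI_eq0 => /set0Pn [y].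
  by rewrite H0.
pose W : finType := ('I_#|C| * 'I_#|S c0|)%type.
apply: (@gcode_bits n (splitA A Q) t W
   (fun x : msgs t => (enum_rank_in ycC (choose (mk x)),
              enum_rank_in wS (phiX (merge c0 (mk x)))))
   (fun j (ww : W) s => psi j (if j \in Q then @enum_val _ (S c0) ww.2 else @enum_val _ C ww.1)
                       (fun k _ => extend s (fun k => c0 k) k))).
  move=> x j /=.
  case: (boolP (j \in Q)) => jQ.
    rewrite enum_rankK_in; last by apply: imset_f.
    have -> : (fun k (_ : k \in A j) =>
                 extend (D:=splitA A Q j) (fun k _ => x k) (fun k => c0 k) k)
              = (fun k _ => merge c0 (mk x) k).
      apply: functional_extensionality_dep => k.
      apply: functional_extensionality_dep => hk.
      rewrite extendE /splitA jQ inE hk /= ffunE mkE.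
      by case: (k \in Q).
    etransitivity; first exact: (Hc (fun i => merge c0 (mk x) i) j).
    by rewrite ffunE jQ mkE.
  have [cC cS] := chooseP (mk x).
  rewrite enum_rankK_in //.
  case/imsetP: cS => z _ ->.
  have -> : (fun k (_ : k \in A j) =>
               extend (D:=splitA A Q j) (fun k _ => x k) (fun k => c0 k) k)
            = (fun k _ => merge (mk x) z k).
    apply: functional_extensionality_dep => k.
    apply: functional_extensionality_dep => hk.
    rewrite extendE /splitA (negbTE jQ) hk ffunE (negbTE (HQ _ _ jQ hk)) mkE.
    by [].
  etransitivity; first exact: (Hc (fun i => merge (mk x) z i) j).
  by rewrite ffunE (negbTE jQ) mkE.
rewrite card_prod !card_ord !expnD expn1.
have H1 : 2 ^ r %/ m * m <= 2 ^ r := leq_divM _ _.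
move: HC Hw H1 mY; rewrite /K.
set P := 2 ^ r; set T := \sum_i t i; set c := #|C|; set q := 2 ^ r %/ m; set Wp := 2 ^ w.
move=> HC Hw H1 mY.
have : c * m <= q.+1 * m * T.+1 by rewrite mulnAC; apply: leq_mul.
have : q.+1 * m * T.+1 <= P * 2 * Wp by apply: leq_mul => //; lia.
lia.
Qed.

From Stdlib Require Import Lra Psatz.
Open Scope R_scope.
Lemma real_bound (y a kk tj TT o Rp D eps : R) :
  0 <= y -> y * a <= tj -> tj <= TT -> 1 <= a -> 0 < kk -> 0 <= o -> 0 <= TT ->
  Rp = kk * a + o -> D * TT * o < kk -> D * eps > 1 -> 0 < eps ->
  Rabs (y - y * kk * a / Rp) < eps.
Proof.
move=> y0 ya tjT a1 k0 o0 T0 EP DT De e0.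
have Rp0 : 0 < Rp by rewrite EP; nra.
have -> : y - y * kk * a / Rp = y * o / Rp by rewrite EP; field; nra.
have yo0 : 0 <= y * o / Rp.
  apply: Rmult_le_pos; [nra | apply: Rlt_le; apply: Rinv_0_lt_compat; lra].
rewrite Rabs_pos_eq //.
apply: (Rmult_lt_reg_r Rp); first lra.
have -> : y * o / Rp * Rp = y * o by field; lra.
have h1 : y <= tj by nra.
have h2 : y * o <= TT * o by nra.
have hk : kk <= kk * a by nra.
have h3 : eps * kk <= eps * Rp by apply: Rmult_le_compat_l; lra.
have hTo : 0 <= TT * o by apply: Rmult_le_pos.
have h4 : TT * o <= D * eps * (TT * o).
  rewrite -{1}(Rmult_1_l (TT * o)); apply: Rmult_le_compat_r; lra.
have h5 : D * eps * (TT * o) = eps * (D * TT * o) by ring.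
have h6 : eps * (D * TT * o) < eps * kk by apply: Rmult_lt_compat_l.
nra.
Qed.
Close Scope R_scope.

Lemma pow_big E c : exists s, E * (s + c) < 2 ^ s.
Proof.
have H3 : forall a, 3 * a ^ 2 < 4 ^ a.
  elim=> [|a IH] //; case: a IH => [|a] IH //.
  rewrite [4 ^ _]expnS.
  have : 3 * a.+2 ^ 2 <= 4 * (3 * a.+1 ^ 2) by rewrite !(expnS _ 1) !expn1; nia.
  lia.
exists (2 * (E + c + 1)); set a := E + c + 1.
rewrite expnM (_ : 2 ^ 2 = 4) //; have := H3 a.
have : E * (2 * a + c) <= 3 * a ^ 2 by rewrite /a; nia.
lia.
Qed.
Delimit Scope R_scope with Re.

Lemma INR_mul a b : INR (a * b) = (INR a * INR b)%Re.
Proof. by rewrite -mult_INR. Qed.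
Lemma INR_add a b : INR (a + b) = (INR a + INR b)%Re.
Proof. by rewrite -plus_INR. Qed.
Lemma INR_lt a b : a < b -> (INR a < INR b)%Re.
Proof. by move/ltP; apply: lt_INR. Qed.
Lemma INR_gt0 a : 0 < a -> (0 < INR a)%Re.
Proof. by move/ltP; apply: lt_0_INR. Qed.
Lemma INR_le a b : a <= b -> (INR a <= INR b)%Re.
Proof. by move/leP; apply: le_INR. Qed.

Lemma split_closure n (A : 'I_n -> {set 'I_n}) (Q : {set 'I_n}) Rt :
  (forall v u, v \notin Q -> u \in A v -> u \notin Q) ->
  achievable A Rt -> closure_Rn (achievable (splitA A Q)) Rt.
Proof.
move=> HQ [Rnn [t [r [phi [psi [r0 [Hc Hr]]]]]]] eps e0.
set T := \sum_i t i.
have [D HD] := INR_unbounded (/ eps).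
have [s Hs] := pow_big (D * T) (T + 2).
set k := 2 ^ s.
have k0 : 0 < k by rewrite expn_gt0.
have [phi1 [psi1 Hc1]] := kfold k Hc.
have Hw : (\sum_i (fun j => k * t j) i).+1 <= 2 ^ (s + T + 1).
  rewrite -big_distrr /= -/T !expnD expn1 -/k.
  have := ltn_expl T (ltnSn 1).
  nia.
have [phi2 [psi2 Hc2]] := split1 Hc1 HQ Hw.
set r' := k * r + 1 + (s + T + 1).
have tjT : forall j, t j <= T.
  by move=> j; rewrite /T (bigD1 j) //=; apply: leq_addr.
exists (fun j => Rt j * INR (k * r) / INR r')%Re.
split.
  split.
    move=> j; apply: Rmult_le_pos; first by apply: Rmult_le_pos => //; apply: pos_INR.
    by apply: Rlt_le; apply: Rinv_0_lt_compat; apply: INR_gt0; rewrite /r'; lia.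
  exists (fun j => k * t j), r', phi2, psi2.
  split; first by rewrite /r'; lia.
  split; first exact: Hc2.
  move=> j /=.
  have Rp0 : (0 < INR r')%Re by apply: INR_gt0; rewrite /r'; lia.
  have a0 : (0 < INR r)%Re by apply: INR_gt0.
  rewrite /Rdiv; apply: Rmult_le_compat_r; first by apply: Rlt_le; apply: Rinv_0_lt_compat.
  rewrite !INR_mul.
  have := Hr j; rewrite /Rdiv => H.
  have H2 : (Rt j * INR r <= INR (t j))%Re.
    apply: (Rmult_le_reg_r (/ INR r)); first by apply: Rinv_0_lt_compat.
    rewrite Rmult_assoc Rinv_r ?Rmult_1_r //; lra.
  have kk0 : (0 <= INR k)%Re by apply: pos_INR.
  nra.
move=> j /=.
have -> : INR (k * r) = (INR k * INR r)%Re by apply: INR_mul.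
rewrite -Rmult_assoc.
apply: (@real_bound _ _ _ (INR (t j)) (INR T) (INR (s + (T + 2))) _ (INR D)).
- exact: Rnn.
- have := Hr j; rewrite /Rdiv => H.
  have a0 : (0 < INR r)%Re by apply: INR_gt0.
  apply: (Rmult_le_reg_r (/ INR r)); first by apply: Rinv_0_lt_compat.
  rewrite Rmult_assoc Rinv_r ?Rmult_1_r //; lra.
- exact: INR_le.
- by have := INR_le r0.
- by apply: INR_gt0.
- exact: pos_INR.
- exact: pos_INR.
- rewrite /r' -INR_mul -INR_add; congr INR; lia.
- rewrite -!INR_mul; apply: INR_lt; exact: Hs.
- have : (/ eps * eps = 1)%Re by field; lra.
  nra.
- exact: e0.
Qed.

Lemma ach_mono n (A B : 'I_n -> {set 'I_n}) Rt :
  (forall j, B j \subset A j) -> achievable B Rt -> achievable A Rt.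
Proof.
move=> HBA [Rnn [t [r [phi [psi [r0 [Hc Hr]]]]]]].
split=> //; exists t, r, phi,
  (fun j y s => psi j y (fun k hk => s k (subsetP (HBA j) k hk))).
by split=> //; split=> // x j; apply: Hc.
Qed.

Lemma closure_refl n (S : ('I_n -> R) -> Prop) Rt : S Rt -> closure_Rn S Rt.
Proof.
move=> HS eps e0; exists Rt; split=> // j.
by rewrite Rminus_diag Rabs_R0.
Qed.

Lemma closure_trans n (S1 S2 : ('I_n -> R) -> Prop) Rt :
  (forall R1, S1 R1 -> closure_Rn S2 R1) -> closure_Rn S1 Rt -> closure_Rn S2 Rt.
Proof.
move=> H12 H1 eps e0.
have e2 : (0 < eps / 2)%Re by lra.
have [R1 [HR1 D1]] := H1 _ e2.
have [R2 [HR2 D2]] := H12 _ HR1 _ e2.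
exists R2; split=> // j.
have := Rabs_triang (Rt j - R1 j) (R1 j - R2 j).
have -> : (Rt j - R1 j + (R1 j - R2 j) = Rt j - R2 j)%Re by ring.
have := D1 j; have := D2 j; lra.
Qed.

Lemma scc_path n (A : 'I_n -> {set 'I_n}) a b :
  connect (sig_edge A) a b -> connect (sig_edge A) b a ->
  connect (edge_on_cycle A) a b.
Proof.
case/connectP => p; elim: p a => [|x p IH] a /=.
  by move=> _ -> _; apply: connect0.
case/andP => ax px lastE ba.
apply: (connect_trans (y := x)).
  apply: connect1; rewrite /edge_on_cycle.
  have -> : a \in A x by [].
  apply: (connect_trans (y := b)) => //.
  by apply/connectP; exists p.
apply: IH => //; apply: (connect_trans ba); exact: connect1.
Qed.

Definition mu n (H : 'I_n -> {set 'I_n}) := \sum_j #|H j|.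

Lemma prune_ind n (A : 'I_n -> {set 'I_n}) N : forall (H : 'I_n -> {set 'I_n}),
  mu H <= N ->
  (forall j, prune_acyclic_edges A j \subset H j) ->
  (forall j, H j \subset A j) ->
  forall Rt, achievable H Rt -> closure_Rn (achievable (prune_acyclic_edges A)) Rt.
Proof.
set G' := prune_acyclic_edges A.
have Heq : forall H : 'I_n -> {set 'I_n}, (forall j, G' j \subset H j) ->
    [forall j, H j \subset G' j] -> H = G'.
  move=> H HGH Hall; apply: functional_extensionality => j.
  by apply/eqP; rewrite eqEsubset HGH andbT; exact: (forallP Hall j).
elim: N => [|N IH] H HN HGH HHA Rt HRt;
  (case: (boolP [forall j, H j \subset G' j]) => Hall;
    [ by apply: closure_refl; rewrite -(Heq H HGH Hall) | ]);
  (move: Hall; rewrite negb_forall => /existsP [j /subsetPn [u uH uG]]).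
  have : 0 < #|H j| by apply/card_gt0P; exists u.
  move: HN; rewrite /mu (bigD1 j) //=; lia.
set Q := [set v | connect (sig_edge H) j v].
have HQ : forall v w, v \notin Q -> w \in H v -> w \notin Q.
  move=> v w; rewrite !inE => vQ wv; apply/negP => wQ.
  by move/negP: vQ; apply; apply: (connect_trans wQ); apply: connect1.
set B := splitA H Q.
have HBH : forall v, B v \subset H v.
  by move=> v; rewrite /B /splitA; case: (v \in Q) => //; apply: subsetIl.
have subHA : subrel (sig_edge H) (connect (sig_edge A)).
  by move=> x y h; apply: connect1; rewrite /sig_edge (subsetP (HHA y)).
have jQ : j \in Q by rewrite inE connect0.
have uB : u \notin B j.
  rewrite /B /splitA jQ inE negb_and; apply/orP; right.
  rewrite inE; apply/negP => cu.
  move/negP: uG; apply; rewrite /G' /prune_acyclic_edges inE /edge_on_cycle.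
  rewrite (subsetP (HHA j) _ uH) /=.
  exact: (connect_sub subHA cu).
have muB : mu B < mu H.
  rewrite /mu (bigD1 j) //= [X in _ < X](bigD1 j) //=.
  have h1 : #|B j| < #|H j|.
    apply: proper_card; apply/properP; split; first exact: HBH.
    by exists u.
  rewrite -addSn; apply: leq_add; first exact: h1.
  by apply: leq_sum => i _; apply: subset_leq_card.
apply: (closure_trans (S1 := achievable B)); last first.
  by apply: split_closure.
move=> R1 HR1; apply: (IH B) => //.
- lia.
- move=> v; apply/subsetP => w wG.
  have wH : w \in H v by apply: (subsetP (HGH v)).
  rewrite /B /splitA; case: (boolP (v \in Q)) => vQ //.
  rewrite inE wH inE.
  move: wG; rewrite /G' /prune_acyclic_edges inE /edge_on_cycle => /andP [wA cvw].
  have cwv : connect (sig_edge A) w v by apply: connect1.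
  have := scc_path cvw cwv.
  have sub2 : subrel (edge_on_cycle A) (connect (sig_edge H)).
    move=> x y h; apply: connect1; rewrite /sig_edge; apply: (subsetP (HGH y)).
    by rewrite /G' /prune_acyclic_edges inE.
  move/(connect_sub sub2) => cH.
  by move: vQ; rewrite inE => vQ; apply: (connect_trans vQ cH).
- by move=> v; apply: subset_trans (HBH v) (HHA v).
Qed.

Theorem mainTheorem8 (n : nat) (A : 'I_n -> {set 'I_n}) :
  side_info_ok A ->
  forall Rt : 'I_n -> R,
    capacity_region A Rt <-> capacity_region (prune_acyclic_edges A) Rt.
Proof.
move=> _ Rt.
have GA : forall j, prune_acyclic_edges A j \subset A j.
  by move=> j; apply/subsetP => i; rewrite inE => /andP[].
split.
  apply: closure_trans => R1 HR1.
  by apply: (@prune_ind n A (mu A) A) => // j.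
apply: closure_trans => R1 HR1; apply: closure_refl.
exact: ach_mono HR1.
Qed.
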